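(* Let $\mu>0$ and $0<\beta<1$. Let $g:\mathbb{C}\to\mathbb{R}$ be given by $g(x)=\frac{\mu+|x|^2}{2}$ for $|x|\ge\sqrt{\mu}$ and $g(x)=\sqrt{\mu}|x|$ for $|x|\le\sqrt{\mu}$. Suppose $z_0\in\partial g(x_0)$ and $|z_0|>\sqrt{\mu}/\beta^2$. Then for all $x_1\in\mathbb{C}$ with $x_1\neq x_0$ and all $z_1\in\partial g(x_1)$, $$\mathrm{Re}\big((z_1-z_0)\overline{(x_1-x_0)}\big)>(1-\beta^2)|x_1-x_0|^2.$$
   Context: $\partial g$ is the convex subdifferential (with $\mathbb{C}$ regarded as $\mathbb{R}^2$ with inner product $\mathrm{Re}(z\bar w)$); explicitly $\partial g(x)=\{x\}$ if $|x|\ge\sqrt\mu$, $\partial g(x)=\{\sqrt{\mu}\,x/|x|\}$ if $0<|x|\le\sqrt\mu$, and $\partial g(0)=\sqrt{\mu}\,\mathbb{D}$, where $\mathbb{D}$ is the closed unit disc. (In the paper $\beta$ is the constant $\beta_N=\inf\{\|Ax\|_2/\|x\|_2:x\ne0,\mathrm{card}(x)\le N\}$ of a matrix $A$, assumed to satisfy $0<\beta_N<1$; only its value matters here.) *)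

(* Defs.v *)
From Stdlib Require Import Reals.
From Coquelicot Require Import Coquelicot.
Open Scope R_scope.

(* Real inner product on C viewed as R^2: <z, w> = Re (z * conj w). *)
Definition cinner (z w : C) : R := Re (Cmult z (Cconj w)).

Definition gmu (mu : R) (x : C) : R :=
  if Rle_dec (sqrt mu) (Cmod x) then (mu + (Cmod x) ^ 2) / 2
  else sqrt mu * Cmod x.

Definition subdiff (f : C -> R) (x z : C) : Prop :=
  forall y : C, f x + cinner z (Cminus y x) <= f y.

(* Main.v *)
Require Import Defs.
From Stdlib Require Import Reals Lra Psatz.
From Coquelicot Require Import Coquelicot.
Open Scope R_scope.
Lemma cinner_pair a b c d : cinner (a,b) (c,d) = a*c + b*d.
Proof. unfold cinner, Cmult, Cconj, Re; simpl; ring. Qed.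
Lemma cminus_pair a b c d : Cminus (a,b) (c,d) = (a-c, b-d).
Proof. unfold Cminus, Cplus, Copp; simpl. f_equal; ring. Qed.
Lemma cmod_pair a b : Cmod (a,b) = sqrt (a^2+b^2).
Proof. reflexivity. Qed.
Lemma nrm_sq a b : sqrt (a^2+b^2) ^ 2 = a^2+b^2.
Proof. apply pow2_sqrt. nra. Qed.
Lemma nrm_ge0 a b : 0 <= sqrt (a^2+b^2).
Proof. apply sqrt_pos. Qed.
Lemma cs a b c d : Rabs (a*c+b*d) <= sqrt (a^2+b^2) * sqrt (c^2+d^2).
Proof.
  rewrite <- sqrt_mult_alt by nra.
  rewrite <- sqrt_Rsqr_abs. apply sqrt_le_1_alt. unfold Rsqr. pose proof (pow2_ge_0 (a*d-b*c)). nra.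
Qed.
Lemma Rabs_le_inv x y : Rabs x <= y -> - y <= x <= y.
Proof. intros H. split; [pose proof (Rabs_maj2 x)|pose proof (Rle_abs x)]; lra. Qed.
Lemma gmu_le mu y : 0 < mu -> gmu mu y <= (mu + Cmod y ^ 2)/2.
Proof.
  intros Hmu. unfold gmu. destruct Rle_dec; [lra|].
  assert (Hs := sqrt_sqrt mu (Rlt_le _ _ Hmu)). nra.
Qed.
Lemma sub_big mu x1 x2 z1 z2 : 0 < mu -> subdiff (gmu mu) (x1,x2) (z1,z2) ->
  sqrt mu <= Cmod (x1,x2) -> z1 = x1 /\ z2 = x2.
Proof.
  intros Hmu H Hx. specialize (H (z1,z2)).
  assert (G := gmu_le mu (z1,z2) Hmu).
  unfold gmu at 1 in H. destruct Rle_dec; [|lra].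
  rewrite cminus_pair, cinner_pair in H. rewrite !cmod_pair, !nrm_sq in *.
  assert (K : (z1-x1)^2+(z2-x2)^2 <= 0) by nra.
  pose proof (pow2_ge_0 (z1-x1)); pose proof (pow2_ge_0 (z2-x2)).
  split; nra.
Qed.
Lemma sub_small mu x1 x2 z1 z2 : 0 < mu -> subdiff (gmu mu) (x1,x2) (z1,z2) ->
  Cmod (x1,x2) < sqrt mu -> Cmod (z1,z2) <= sqrt mu /\ z1*x1+z2*x2 >= sqrt mu * Cmod (x1,x2).
Proof.
  intros Hmu H Hx. assert (Hs := sqrt_sqrt mu (Rlt_le _ _ Hmu)).
  assert (Hs0 := sqrt_lt_R0 mu Hmu).
  assert (H0 := H (0,0)). specialize (H (z1,z2)).
  assert (G := gmu_le mu (z1,z2) Hmu).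
  assert (g0 : gmu mu (0,0) = 0).
  { unfold gmu. rewrite cmod_pair. replace (0^2+0^2) with 0 by ring. rewrite sqrt_0.
    destruct Rle_dec; lra. }
  unfold gmu at 1 in H. unfold gmu at 1 in H0. destruct Rle_dec; [lra|].
  rewrite g0 in H0.
  rewrite cminus_pair, cinner_pair in H, H0. rewrite !cmod_pair in *.
  rewrite nrm_sq in G.
  assert (C := cs z1 z2 x1 x2). apply Rabs_le_inv in C.
  pose proof (nrm_ge0 z1 z2). pose proof (nrm_ge0 x1 x2). pose proof (nrm_sq z1 z2).
  split; [|nra].
  destruct (Rle_dec (sqrt (z1^2+z2^2)) (sqrt mu)) as [|Hn]; [assumption|].
  exfalso. apply Rnot_le_lt in Hn. nra.
Qed.

Theorem lemma4p3 (mu beta : R) (x0 z0 : C) :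
  0 < mu -> 0 < beta < 1 ->
  subdiff (gmu mu) x0 z0 ->
  Cmod z0 > sqrt mu / beta ^ 2 ->
  forall x1 z1 : C, x1 <> x0 -> subdiff (gmu mu) x1 z1 ->
  cinner (Cminus z1 z0) (Cminus x1 x0) > (1 - beta ^ 2) * (Cmod (Cminus x1 x0)) ^ 2.
Proof.
  intros Hmu Hb H0 Hz0 x1 z1 Hne H1.
  destruct x0 as [a1 a2], z0 as [w1 w2], x1 as [b1 b2], z1 as [v1 v2].
  assert (Hs := sqrt_sqrt mu (Rlt_le _ _ Hmu)).
  assert (Hs0 := sqrt_lt_R0 mu Hmu).
  assert (Hb2 : 0 < beta^2 < 1) by (split; nra).
  assert (Hsb : sqrt mu / beta ^ 2 > sqrt mu).
  { apply Rlt_gt. apply Rmult_lt_reg_r with (beta^2); [lra|].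
    unfold Rdiv. rewrite Rmult_assoc, Rinv_l by lra. nra. }
  assert (Hx0 : sqrt mu <= Cmod (a1,a2)).
  { destruct (Rle_dec (sqrt mu) (Cmod (a1,a2))) as [|n]; [assumption|].
    apply Rnot_le_lt in n. destruct (sub_small _ _ _ _ _ Hmu H0 n). lra. }
  destruct (sub_big _ _ _ _ _ Hmu H0 Hx0) as [-> ->].
  assert (Hd : 0 < (b1-a1)^2 + (b2-a2)^2).
  { destruct (Req_dec b1 a1); destruct (Req_dec b2 a2); try nra.
    subst; congruence. }
  rewrite !cminus_pair, cinner_pair, cmod_pair, nrm_sq.
  destruct (Rle_dec (sqrt mu) (Cmod (b1,b2))) as [Hx1|Hx1].
  - destruct (sub_big _ _ _ _ _ Hmu H1 Hx1) as [-> ->]. nra.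
  - apply Rnot_le_lt in Hx1. destruct (sub_small _ _ _ _ _ Hmu H1 Hx1) as [Hz1 Hi].
    rewrite cmod_pair in *.
    set (s := sqrt mu) in *.
    set (b := sqrt (b1^2+b2^2)) in *.
    set (a := sqrt (a1^2+a2^2)) in *.
    set (D := sqrt ((b1-a1)^2+(b2-a2)^2)).
    assert (E : sqrt ((v1-b1)^2+(v2-b2)^2) <= s - b).
    { assert (Hb0 : 0 <= b) by apply nrm_ge0.
      rewrite <- (sqrt_pow2 (s - b)) by lra. apply sqrt_le_1_alt.
      assert (Q1 : b^2 = b1^2+b2^2) by apply nrm_sq.
      assert (Q2 : sqrt (v1^2+v2^2)^2 = v1^2+v2^2) by apply nrm_sq.
      pose proof (nrm_ge0 v1 v2). nra. }
    assert (C := cs (v1-b1) (v2-b2) (b1-a1) (b2-a2)). fold D in C.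
    apply Rabs_le_inv in C.
    assert (T : a <= b + D).
    { assert (C2 := cs b1 b2 (b1-a1) (b2-a2)). fold b D in C2. apply Rabs_le_inv in C2.
      assert (Q1 : a^2 = a1^2+a2^2) by apply nrm_sq.
      assert (Q2 : b^2 = b1^2+b2^2) by apply nrm_sq.
      assert (Q3 : D^2 = (b1-a1)^2+(b2-a2)^2) by apply nrm_sq.
      assert (P1 : 0 <= a) by apply nrm_ge0.
      assert (P2 : 0 <= b) by apply nrm_ge0.
      assert (P3 : 0 <= D) by apply nrm_ge0.
      nra. }
    assert (Dsq : D^2 = (b1-a1)^2+(b2-a2)^2) by apply nrm_sq.
    assert (D0 : 0 < D) by (apply sqrt_lt_R0; lra).
    assert (Hbeta : beta^2 * a > s).
    { unfold Rdiv in Hz0. apply Rmult_gt_compat_l with (r := beta^2) in Hz0; [|lra].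
      rewrite <- Rmult_assoc, (Rmult_comm _ s), Rmult_assoc, Rinv_r in Hz0 by lra. lra. }
    assert (Pb : 0 <= b) by apply nrm_ge0.
    assert (beta^2 * D > s - b) by nra.
    assert (E2 : (v1 - b1) * (b1 - a1) + (v2 - b2) * (b2 - a2) >= -(s-b)*D).
    { pose proof (nrm_ge0 (v1-b1) (v2-b2)). nra. }
    nra.
Qed.
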